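(* Let $K$ be a finite group with trivial centre. Suppose there exist subgroups $X$, $Y$ of $\mathrm{Aut}(K)$ such that $X\cap Y = 1$ and $XY = X\,\mathrm{Inn}(K) = Y\,\mathrm{Inn}(K)$. Then there exists a skew left brace with additive group isomorphic to $K$ whose multiplicative group is isomorphic to a subdirect product of $X$ and $Y$.
   Context: A skew left brace is a set $B$ with two group structures $(B,+)$ (not necessarily abelian) and $(B,\cdot)$ such that $a(b+c) = ab - a + ac$ for all $a,b,c\in B$; its additive group is $(B,+)$ and its multiplicative group is $(B,\cdot)$. $\mathrm{Inn}(K)$ is the group of inner automorphisms of $K$. A subdirect product of groups $X$ and $Y$ is a subgroup $W\le X\times Y$ whose projections onto $X$ and onto $Y$ are both surjective. *)

(* Defs.v *)
From HB Require Import structures.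
From mathcomp Require Import all_boot all_fingroup all_solvable.
Set Implicit Arguments. Unset Strict Implicit. Unset Printing Implicit Defensive.
Local Open Scope group_scope.

Definition Inn (gT : finGroupType) (K : {group gT}) : {set {perm gT}} :=
  conj_aut K @* K.

Definition group_law (T : Type) (op : T -> T -> T) (e : T) (inv : T -> T) :=
  [/\ associative op, left_id e op, right_id e op,
      left_inverse e inv op & right_inverse e inv op].

Definition is_skew_brace (T : Type)
  (add : T -> T -> T) (zero : T) (opp : T -> T)
  (mul : T -> T -> T) (one : T) (inv : T -> T) :=
  [/\ group_law add zero opp, group_law mul one inv &
      (forall a b c, mul a (add b c) = add (add (mul a b) (opp a)) (mul a c))].

Definition iso_to_group (T : Type) (op : T -> T -> T)
  (hT : finGroupType) (H : {set hT}) :=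
  exists f : T -> hT,
    [/\ injective f, (forall a, f a \in H), (forall h, h \in H -> exists a, f a = h)
      & (forall a b, f (op a b) = f a * f b)].

Definition subdirect (aT bT : finGroupType) (X : {set aT}) (Y : {set bT})
  (W : {group (aT * bT)}) :=
  [/\ W \subset setX X Y, fst @: W = X & snd @: W = Y].

(* Main.v *)
Require Import Defs.
From HB Require Import structures.
From mathcomp Require Import all_boot all_fingroup all_solvable.
Set Implicit Arguments. Unset Strict Implicit. Unset Printing Implicit Defensive.
Local Open Scope group_scope.

Lemma conj_aut_Aut (gT : finGroupType) (K : {group gT}) k :
  k \in K -> conj_aut K k \in Aut K.
Proof.
move=> Kk; apply: (subsetP (Aut_conj_aut K K)); exact: (mem_morphim (conj_aut_morphism K) (subsetP (normG K) k Kk) Kk).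
Qed.

Lemma Inn_normJ (gT : finGroupType) (K : {group gT}) a k :
  a \in Aut K -> k \in K -> conj_aut K k ^ a = conj_aut K (a k).
Proof.
move=> Aa Kk; have Kak : a k \in K by exact: Aut_closed.
apply: (eq_Aut (groupJ (conj_aut_Aut Kk) Aa) (conj_aut_Aut Kak)) => z Kz.
have Aai : a^-1 \in Aut K by rewrite groupV.
have Kz' : a^-1 z \in K by exact: Aut_closed.
rewrite conjgE !permM conj_autE // conj_autE //.
change (autm Aa (a^-1 z ^ k) = z ^ autm Aa k).
rewrite morphJ //; change (a (a^-1 z) ^ a k = z ^ a k); by rewrite permKV.
Qed.

Theorem mainTheorem2 (gT : finGroupType) (K : {group gT})
  (X Y : {group {perm gT}}) :
  'Z(K) = 1 ->
  X \subset Aut K -> Y \subset Aut K ->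
  X :&: Y = 1 ->
  X * Y = X * Inn K -> X * Inn K = Y * Inn K ->
  exists (T : Type) (add : T -> T -> T) (zero : T) (opp : T -> T)
         (mul : T -> T -> T) (one : T) (inv : T -> T),
    [/\ is_skew_brace add zero opp mul one inv,
        iso_to_group add K &
        exists W : {group ({perm gT} * {perm gT})},
          subdirect X Y W /\ iso_to_group mul W].
Proof.
move=> ZK sXA sYA tXY eXY eXI.
have [N defN] : {N : {group {perm gT}} | Inn K = N} by exists (conj_aut K @* K)%G.
rewrite defN in eXY eXI.
pose c := conj_aut K.
have nK : forall k, k \in K -> k \in 'N(K) by move=> k; apply: (subsetP (normG K)).
have cN : forall k, k \in K -> c k \in N.
  move=> k Kk; rewrite -defN; exact: (mem_morphim (conj_aut_morphism K) (nK k Kk) Kk).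
have NP : forall t, t \in N -> exists2 k, k \in K & t = c k.
  move=> t; rewrite -defN => /morphimP[k _ Kk ->]; by exists k.
have cM : {in K &, {morph c : x y / x * y}}.
  by move=> x y Kx Ky; apply: conj_aut_morphM; apply: nK.
have cV : {in K, {morph c : x / x^-1}}.
  by move=> x Kx; apply: (morphV (conj_aut_morphism K)); apply: nK.
have cinj : {in K &, injective c}.
  move=> a b Ka Kb eab.
  have Cab : a * b^-1 \in 'C(K).
    rewrite -(ker_conj_aut K); apply/kerP; first by apply: nK; rewrite groupM ?groupV.
    by change (c (a * b^-1) = 1); rewrite cM ?groupV // cV // eab mulgV.
  have : a * b^-1 \in 'Z(K) by apply/setIP; split => //; rewrite groupM ?groupV.
  by rewrite ZK => /set1gP/eqP; rewrite -eq_mulgV1 => /eqP.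
have normN : forall al t, al \in Aut K -> t \in N -> t ^ al \in N.
  move=> al t Aal /NP[k Kk ->]; rewrite /c Inn_normJ //; apply: cN; exact: Aut_closed.
pose pi (w : {perm gT} * {perm gT}) := w.1 * w.2^-1.
pose S := setX X Y :&: [set w | pi w \in N].
have SP : forall w, reflect [/\ w.1 \in X, w.2 \in Y & pi w \in N] (w \in S).
  move=> [x y]; rewrite !inE /=; apply: (iffP idP).
    by case/andP=> /andP[-> ->] ->.
  by case=> -> -> ->.
have XA : forall x, x \in X -> x \in Aut K by apply/subsetP.
have YA : forall x, x \in Y -> x \in Aut K by apply/subsetP.
have gS : group_set S.
  apply/group_setP; split; first by apply/SP; rewrite /pi /= invg1 mulg1 !group1.
  move=> [x1 y1] [x2 y2] /SP[/= X1 Y1 P1] /SP[/= X2 Y2 P2]; apply/SP.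
  split; [exact: groupM | exact: groupM |].
  have -> : pi (x1 * x2, y1 * y2) = (pi (x2, y2)) ^ x1^-1 * pi (x1, y1).
    by rewrite /pi /= conjgE invgK invMg !mulgA mulgKV.
  by rewrite groupM // normN // groupV XA.
pose W := Group gS.
have uniqS : forall w1 w2, w1 \in S -> w2 \in S -> pi w1 = pi w2 -> w1 = w2.
  move=> [x1 y1] [x2 y2] /SP[/= X1 Y1 _] /SP[/= X2 Y2 _]; rewrite /pi /= => e.
  have e' : x2^-1 * x1 = y2^-1 * y1.
    by rewrite -[x1](mulgKV y1) e !mulgA mulVg mul1g.
  have h1 : x2^-1 * x1 = 1.
    by apply/set1gP; rewrite -tXY inE groupM ?groupV //= e' groupM ?groupV.
  have h2 : y2^-1 * y1 = 1 by rewrite -e'.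
  move/eqP: h1; rewrite -eq_mulVg1 => /eqP ->.
  by move/eqP: h2; rewrite -eq_mulVg1 => /eqP ->.
pose T := subg_of K.
have psiP : forall a : T, exists w, (w \in S) && (pi w == c (sgval a)).
  move=> a; have : c (sgval a) \in X * Y by rewrite eXY -[c (sgval a)]mul1g; apply: mem_mulg; rewrite ?group1 ?cN ?subgP.
  case/mulsgP=> x y Xx Yy e; exists (x, y^-1); apply/andP; split.
    by apply/SP; rewrite /pi /= invgK -e cN ?subgP // groupV.
  by rewrite /pi /= invgK e.
pose psi a := sval (sigW (psiP a)).
have psiS : forall a, psi a \in S by move=> a; rewrite /psi; case: sigW => w /= /andP[].
have psiE : forall a, pi (psi a) = c (sgval a).
  by move=> a; rewrite /psi; case: sigW => w /= /andP[_ /eqP].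
have backP : forall w, exists a : T, (w \in S) ==> (c (sgval a) == pi w).
  move=> w; case Sw: (w \in S); last by exists 1.
  move/SP: Sw => [_ _ /NP[k Kk ->]]; exists (subg K k); by rewrite /= (@subgK gT K k Kk).
pose back w := sval (sigW (backP w)).
have backE : forall w, w \in S -> c (sgval (back w)) = pi w.
  by move=> w Sw; rewrite /back; case: sigW => a /=; rewrite Sw => /eqP.
have cT : injective (fun a : T => c (sgval a)).
  by move=> a b /= e; apply: subg_inj; apply: cinj; rewrite ?subgP.
have psi_back : forall w, w \in S -> psi (back w) = w.
  by move=> w Sw; apply: uniqS => //; rewrite psiE backE.
have back_psi : forall a, back (psi a) = a by move=> a; apply: cT; rewrite /= backE // psiE.
have psi_inj : injective psi := can_inj back_psi.
have SM : forall w1 w2, w1 \in S -> w2 \in S -> w1 * w2 \in S := @groupM _ W.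
have SV : forall w, w \in S -> w^-1 \in S := @groupVr _ W.
have S1 : 1 \in S := @group1 _ W.
pose mul (a b : T) := back (psi a * psi b).
pose one := back 1.
pose inv (a : T) := back (psi a)^-1.
have psiM : forall a b, psi (mul a b) = psi a * psi b.
  by move=> a b; rewrite psi_back // SM.
have psi1 : psi one = 1 by rewrite psi_back.
have psiV : forall a, psi (inv a) = (psi a)^-1 by move=> a; rewrite psi_back // SV.
have cmul : forall a b : T, c (sgval (mul a b)) = (psi a).1 * c (sgval b) * (psi a).2^-1.
  move=> a b; rewrite backE ?SM // -psiE /pi /=.
  by rewrite invMg !mulgA.
have cK : forall a : T, c (sgval a) = (psi a).1 * (psi a).2^-1 by move=> a; rewrite -psiE.
exists T, (@mulg T), 1, (@invg T), mul, one, inv; split.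
- split.
  + split; [exact: mulgA | exact: mul1g | exact: mulg1 | exact: mulVg | exact: mulgV].
  + split.
    * by move=> a b d; apply: psi_inj; rewrite !psiM mulgA.
    * by move=> a; apply: psi_inj; rewrite psiM psi1 mul1g.
    * by move=> a; apply: psi_inj; rewrite psiM psi1 mulg1.
    * by move=> a; apply: psi_inj; rewrite psiM psiV psi1 mulVg.
    * by move=> a; apply: psi_inj; rewrite psiM psiV psi1 mulgV.
  + move=> a b d; apply: cT => /=.
    rewrite !cM ?groupM ?groupV ?subgP // cV ?subgP // !cmul.
    have -> : sgval (b * d) = sgval b * sgval d by [].
    rewrite cM ?subgP // (cK a) invMg invgK.
    by rewrite !mulgA !mulgKV.
- exists sgval; split.
  + exact: subg_inj.
  + exact: subgP.
  + by move=> h Kh; exists (subg K h); rewrite (@subgK gT K h Kh).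
  + by [].
- exists W; split.
  + split.
    * exact: subsetIl.
    * apply/eqP; rewrite eqEsubset; apply/andP; split.
        by apply/subsetP=> _ /imsetP[w /SP[Xw _ _] ->].
      apply/subsetP=> x Xx.
      have : x \in Y * N by rewrite -eXI -[x]mulg1; apply: mem_mulg; rewrite ?group1.
      case/mulsgP=> y t Yy Nt ex.
      apply/imsetP; exists (x, y) => //; apply/SP; split => //.
      have -> : pi (x, y) = t ^ y^-1 by rewrite /pi /= ex conjgE invgK !mulgA.
      by rewrite normN // groupV YA.
    * apply/eqP; rewrite eqEsubset; apply/andP; split.
        by apply/subsetP=> _ /imsetP[w /SP[_ Yw _] ->].
      apply/subsetP=> y Yy.
      have : y \in X * N by rewrite eXI -[y]mulg1; apply: mem_mulg; rewrite ?group1.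
      case/mulsgP=> x t Xx Nt ey.
      apply/imsetP; exists (x, y) => //; apply/SP; split => //.
      have -> : pi (x, y) = t^-1 ^ x^-1 by rewrite /pi /= ey conjgE invgK invMg !mulgA.
      by rewrite normN ?groupV // XA.
  + exists psi; split.
    * exact: psi_inj.
    * exact: psiS.
    * by move=> h Wh; exists (back h); rewrite psi_back.
    * exact: psiM.
Qed.
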